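(* Let $M>0$ and let $\phi$ be a real odd $C^\infty$ $2\pi$-periodic function with zero mean such that $\|\partial_x^2w\|_H^2-(w\partial_x\phi,w)\ge M\|w\|_H^2$ for all $w\in H^2$ with $w(0)=0$. For $s\in\mathbb R$ put $\phi_s(x)=\phi(x-s)$ and for $u\in H$ define $F(u):=\min_{s\in[-\pi,\pi]}\|u-\phi_s\|_H^2$. Let $u(t)\in H_0$, $t\in[0,T]$, be smooth. Then $t\mapsto F(u(t))$ is absolutely continuous and $$\frac{d}{dt}F(u(t))=\frac{d}{dt}\|v(t)\|_H^2=2(\partial_tu(t),v(t))\quad\text{for almost all }t\in[0,T],$$ where $v(t)=u(t)-\phi_{s^*(t)}$ and $s^*(t)$ is a minimizer in the definition of $F(u(t))$.
   Context: $H=L^2_{per}(-\pi,\pi)$ with inner product $(v,w)=\frac1{2\pi}\int_{-\pi}^{\pi}v\bar w\,dx$; $H_0$ is the subspace of zero-mean functions; $H^2$ is the periodic Sobolev space. *)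

(* Defs.v *)
From HB Require Import structures.
From mathcomp Require Import all_boot all_order all_algebra.
From mathcomp Require Import all_classical all_reals all_analysis.
Set Implicit Arguments. Unset Strict Implicit. Unset Printing Implicit Defensive.
Import Order.TTheory GRing.Theory Num.Theory.
Import numFieldNormedType.Exports.
Local Open Scope classical_set_scope.
Local Open Scope ring_scope.

Section Defs.
Variable R : realType.

Notation mu := (@lebesgue_measure R).

Definition periodic2pi (f : R -> R) : Prop := forall x, f (x + 2 * pi) = f x.

Definition ipH (f g : R -> R) : R :=
  (2 * pi)^-1 * Rintegral mu `[- pi, pi]%classic (fun x => f x * g x).

Definition normH2 (f : R -> R) : R := ipH f f.

Definition zero_mean (f : R -> R) : Prop :=
  Rintegral mu `[- pi, pi]%classic f = 0.

Definition smooth (f : R -> R) : Prop :=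
  forall (n : nat) (x : R), derivable (derive1n n f) x 1.

Definition dt (u : R -> R -> R) : R -> R -> R :=
  fun t x => derive1 (fun s => u s x) t.
Definition dx (u : R -> R -> R) : R -> R -> R :=
  fun t x => derive1 (u t) x.

Fixpoint pder (w : seq bool) (u : R -> R -> R) : R -> R -> R :=
  match w with
  | [::] => u
  | b :: w' => if b then dt (pder w' u) else dx (pder w' u)
  end.

Definition smooth2 (u : R -> R -> R) : Prop :=
  forall w : seq bool,
    (forall t x, derivable (fun s => pder w u s x) t 1 /\
                 derivable (pder w u t) x 1) /\
    continuous (fun p : R * R => pder w u p.1 p.2).

Definition abs_cont (a b : R) (f : R -> R) : Prop :=
  forall e : R, 0 < e -> exists2 d : R, 0 < d &
    forall (n : nat) (s t : nat -> R),
      (forall i, (i < n)%N -> a <= s i /\ s i <= t i /\ t i <= b) ->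
      (forall i, (i.+1 < n)%N -> t i <= s i.+1) ->
      \sum_(i < n) (t i - s i) < d ->
      \sum_(i < n) `|f (t i) - f (s i)| < e.

(* periodic Sobolev space H^2: w is 2pi-periodic, C^1, w' is absolutely
   continuous on every compact interval, and w'' (a.e. derivative of w')
   is square integrable over a period. *)
Definition H2per (w : R -> R) : Prop :=
  periodic2pi w /\
  (forall x, derivable w x 1) /\ continuous (derive1 w) /\
  (forall a b, abs_cont a b (derive1 w)) /\
  mu.-integrable `[- pi, pi]%classic
     (fun x => ((derive1 (derive1 w) x) ^+ 2)%:E).

Definition phishift (phi : R -> R) (s : R) : R -> R := fun x => phi (x - s).

(* F(u) = min_{s in [-pi,pi]} ||u - phi_s||^2 (an infimum, attained) *)
Definition Fdist (phi u : R -> R) : R :=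
  inf [set normH2 (fun x => u x - phishift phi s x) | s in `[- pi, pi]%classic].

Definition is_minimizer (phi u : R -> R) (s : R) : Prop :=
  `[- pi, pi]%classic s /\
  forall s', `[- pi, pi]%classic s' ->
    normH2 (fun x => u x - phishift phi s x) <= normH2 (fun x => u x - phishift phi s' x).

End Defs.

(* Main.v *)
Require Import Defs.
From HB Require Import structures.
From mathcomp Require Import all_boot all_order all_algebra.
From mathcomp Require Import all_classical all_reals all_analysis.
From mathcomp Require Import ring lra.
Import Order.TTheory GRing.Theory Num.Theory.
Import numFieldNormedType.Exports.
Local Open Scope classical_set_scope.
Local Open Scope ring_scope.
Section Abs.
Variable R : realType.

Lemma lip_abs_cont (F : R -> R) (T L : R) : 0 <= L ->
  (forall t t', `[0, T]%classic t -> `[0, T]%classic t' ->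
     `|F t' - F t| <= L * `|t' - t|) -> abs_cont 0 T F.
Proof.
move=> L0 HL e e0; exists (e / (L + 1)); first by rewrite divr_gt0 // ltr_wpDl.
move=> n s t Hst _ Hsum.
have Hi : forall i : 'I_n, `|F (t i) - F (s i)| <= L * (t i - s i).
  move=> i; have [H1 [H2 H3]] := Hst i (ltn_ord i).
  have := HL (s i) (t i).
  rewrite /= !in_itv /= H1 (le_trans H1 H2) H3 (le_trans H2 H3) => /(_ isT isT).
  by rewrite [`|t i - s i|]ger0_norm // subr_ge0.
have S0 : 0 <= \sum_(i < n) (t i - s i).
  apply: sumr_ge0 => j _; have [_ [H2 _]] := Hst j (ltn_ord j); by rewrite subr_ge0.
apply: (le_lt_trans (ler_sum _ (fun i _ => Hi i))).
rewrite -mulr_sumr.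
have : (L + 1) * \sum_(i < n) (t i - s i) < e.
  by rewrite mulrC -ltr_pdivlMr ?ltr_wpDl.
nra.
Qed.

End Abs.
Section AE.
Variable R : realType.
Variables (F p : R -> R) (T C : R).
Hypothesis C0 : 0 <= C.
Local Notation inI t := (`[0, T]%classic t).
Definition est (t d : R) := forall t', inI t' -> F t' <= F t + (t' - t) * d + C * (t' - t) ^+ 2.
Hypothesis Hp : forall t, inI t -> est t (p t).

Lemma inIP t : inI t <-> 0 <= t /\ t <= T.
Proof. by rewrite /= in_itv /=; split => [/andP//|[-> ->]]. Qed.

Definition q t := p t - 2 * C * t.

Lemma mono t t' : inI t -> inI t' -> t <= t' -> q t' <= q t.
Proof.
move=> It It' tt'; have h1 := Hp _ It _ It'; have h2 := Hp _ It' _ It.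
case: (eqVneq t t') => [-> //|ne].
have hpos : 0 < t' - t by rewrite subr_gt0 lt_def eq_sym ne.
set h := t' - t in hpos h1 h2 *.
have e2 : t - t' = - h by rewrite /h opprB.
rewrite e2 sqrrN mulNr in h2.
have : 0 <= h * (p t - p t' + 2 * C * h).
  have -> : h * (p t - p t' + 2 * C * h) = h * p t - h * p t' + 2 * C * h ^+ 2 by ring.
  by lra.
rewrite pmulr_rge0 // /q => H.
move: H; rewrite /h => H.
have E : 2 * C * (t' - t) = 2 * C * t' - 2 * C * t by ring.
lra.
Qed.

Lemma Kest t t' : inI t -> inI t' ->
  `|F t' - F t - (t' - t) * p t| <= `|t' - t| * `|q t' - q t| + 3 * C * (t' - t) ^+ 2.
Proof.
move=> It It'; have h1 := Hp _ It _ It'; have h2 := Hp _ It' _ It.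
set h := t' - t in h1 h2 *.
have e2 : t - t' = - h by rewrite /h opprB.
rewrite e2 sqrrN mulNr in h2.
set a := h * (q t' - q t).
have ea : a = h * p t' - h * p t - 2 * C * h ^+ 2.
  by rewrite /a /q /h; ring.
have na : - `|a| <= a by have := ler_norm (- a); rewrite normrN; lra.
have hq : `|h| * `|q t' - q t| = `|a| by rewrite /a normrM.
have hh : 0 <= h ^+ 2 by rewrite sqr_ge0.
have k0 : 0 <= C * h ^+ 2 by rewrite mulr_ge0.
have e3 : 3 * C * h ^+ 2 = 3 * (C * h ^+ 2) by ring.
have e4 : 2 * C * h ^+ 2 = 2 * (C * h ^+ 2) by ring.
rewrite e4 in ea; rewrite hq e3 ler_norml; apply/andP; split; lra.
Qed.

Definition cont t := forall e, 0 < e -> exists2 d, 0 < d &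
  forall t', inI t' -> `|t' - t| < d -> `|q t' - q t| <= e.


Lemma good_cvg t : 0 < t < T -> cont t ->
  (fun h => h^-1 *: ((F \o shift t) (h *: 1) - F t)) @ 0^' --> p t.
Proof.
move=> /andP[t0 tT] ct; apply/cvgrPdist_le => eps eps0.
have [d d0 Hd] := ct (eps / 2) ltac:(by rewrite divr_gt0).
set dl := Num.min (Num.min d (Num.min t (T - t))) (eps / (6 * C + 1)).
have dl0 : 0 < dl by rewrite !lt_min d0 t0 subr_gt0 tT divr_gt0 // ltr_wpDl // mulr_ge0.
have dld : dl <= d by rewrite /dl !ge_min lexx !(orbT, orTb).
have dlt : dl <= t by rewrite /dl !ge_min lexx !(orbT, orTb).
have dlT : dl <= T - t by rewrite /dl !ge_min lexx !(orbT, orTb).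
have dle : dl <= eps / (6 * C + 1) by rewrite /dl !ge_min lexx !(orbT, orTb).
have dle' : dl * (6 * C + 1) <= eps by rewrite -ler_pdivlMr // ltr_wpDl // mulr_ge0.
apply: filterS (dnbhs_ball (0 : R) dl0) => h [hb hne].
rewrite /ball /= sub0r normrN in hb.
have hn0 : h != 0 by apply/eqP.
have E : h^-1 *: ((F \o shift t) h%:A - F t) = h^-1 * (F (h + t) - F t).
  by rewrite /= [h%:A]mulr1.
rewrite E.
have It : inI t by apply/inIP; split; lra.
have It' : inI (h + t).
  apply/inIP; have := ler_norm h; have := ler_norm (- h); rewrite normrN; lra.
have K := @Kest t (h + t) It It'.
rewrite addrK in K.
have Dq := Hd _ It' ltac:(by rewrite addrK; lra).
set Y := F (h + t) - F t - h * p t in K.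
have -> : p t - h^-1 * (F (h + t) - F t) = - (h^-1 * Y).
  by rewrite /Y [h^-1 * (_ - h * p t)]mulrBr [h^-1 * (h * _)]mulrA mulVf // mul1r; ring.
rewrite normrN normrM normfV mulrC ler_pdivrMr ?normr_gt0 //.
apply: (le_trans K).
rewrite -(real_normK (num_real h)).
set x := `|h| in hb K *.
have x0 : 0 <= x by rewrite normr_ge0.
set z := `|q (h + t) - q t| in Dq *.
have a1 : C * x <= C * dl by rewrite ler_wpM2l // ltW.
have a2 : C * dl <= eps / 6.
  have e6 : dl * (6 * C + 1) = 6 * (C * dl) + dl by ring.
  rewrite e6 in dle'; rewrite ler_pdivlMr //; lra.
have b1 : x * z <= x * (eps / 2) by rewrite ler_wpM2l.
have b2 : x * (C * x) <= x * (eps / 6) by rewrite ler_wpM2l // (le_trans a1 a2).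
have e1 : 3 * C * x ^+ 2 = 3 * (x * (C * x)) by ring.
have e2 : eps * x = x * (eps / 2) + 3 * (x * (eps / 6)) by field.
rewrite e1 e2; lra.
Qed.

Lemma good_d t d : 0 < t < T -> cont t -> est t d -> d = p t.
Proof.
move=> /andP[t0 tT] ct Ed.
have Heps : forall eps, 0 < eps -> `|d - p t| <= eps.
  move=> eps eps0.
  have [del del0 Hd] := ct (eps / 2) ltac:(by rewrite divr_gt0).
  set dl := Num.min (Num.min (del / 2) (Num.min t (T - t))) (eps / (8 * C + 1)).
  have dl0 : 0 < dl by rewrite !lt_min divr_gt0 // t0 subr_gt0 tT divr_gt0 // ltr_wpDl // mulr_ge0.
  have dld : dl <= del / 2 by rewrite /dl !ge_min lexx !(orbT, orTb).
  have dlt : dl <= t by rewrite /dl !ge_min lexx !(orbT, orTb).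
  have dlT : dl <= T - t by rewrite /dl !ge_min lexx !(orbT, orTb).
  have dle : dl <= eps / (8 * C + 1) by rewrite /dl !ge_min lexx !(orbT, orTb).
  have dle' : dl * (8 * C + 1) <= eps by rewrite -ler_pdivlMr // ltr_wpDl // mulr_ge0.
  have It : inI t by apply/inIP; split; lra.
  have side : forall h, `|h| = dl -> h * (p t - d) <= dl * eps.
    move=> h hdl.
    have It' : inI (h + t).
      apply/inIP; have := ler_norm h; have := ler_norm (- h); rewrite normrN; lra.
    have K := @Kest t (h + t) It It'.
    have E := Ed _ It'.
    rewrite addrK in K E.
    have Dq := Hd _ It' ltac:(rewrite addrK; lra).
    rewrite -(real_normK (num_real h)) hdl in K E.
    set z := `|q (h + t) - q t| in Dq K.
    have x0 : 0 <= dl by exact: ltW.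
    have a1 : C * dl <= eps / 8.
      have e6 : dl * (8 * C + 1) = 8 * (C * dl) + dl by ring.
      rewrite e6 in dle'; rewrite ler_pdivlMr //; lra.
    have b1 : dl * z <= dl * (eps / 2) by rewrite ler_wpM2l.
    have b2 : dl * (C * dl) <= dl * (eps / 8) by rewrite ler_wpM2l.
    have e1 : C * dl ^+ 2 = dl * (C * dl) by ring.
    have e2 : dl * eps = dl * (eps / 2) + 4 * (dl * (eps / 8)) by field.
    have e3 : 3 * C * dl ^+ 2 = 3 * (dl * (C * dl)) by ring.
    have e4 : h * (p t - d) = h * p t - h * d by ring.
    rewrite e3 in K; rewrite e1 in E; rewrite e2 e4.
    move: K; rewrite ler_norml => /andP[K1 _]; lra.
  have s1 := side dl ltac:(by rewrite ger0_norm // ltW).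
  have s2 := side (- dl) ltac:(by rewrite normrN ger0_norm // ltW).
  rewrite ler_norml; apply/andP; split.
  - by move: s1; rewrite -ler_pdivlMl // mulrA mulVf ?gt_eqF // mul1r; lra.
  - by move: s2; rewrite mulNr -mulrN -ler_pdivlMl // mulrA mulVf ?gt_eqF // mul1r; lra.
case: (eqVneq d (p t)) => // ne.
have pos : 0 < `|d - p t| / 2 by rewrite divr_gt0 // normr_gt0 subr_eq0.
have := Heps _ pos; lra.
Qed.


Lemma bad_rat t : 0 < t < T -> ~ cont t -> exists r : rat, forall t', inI t' ->
  (t < t' -> q t' < ratr r) /\ (t' < t -> ratr r < q t').
Proof.
move=> /andP[t0 tT] nc.
have It : inI t by apply/inIP; split; lra.
have [e [e0 He]] : exists e, 0 < e /\ forall d, 0 < d -> exists t', inI t' /\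
    `|t' - t| < d /\ e < `|q t' - q t|.
  apply: contrapT => H; apply: nc => e e0.
  apply: contrapT => H2; apply: H; exists e; split => // d d0.
  apply: contrapT => H3; apply: H2; exists d => // t' It' td.
  rewrite leNgt; apply/negP => lt; apply: H3; exists t'; split => //.
case: (EM (forall d, 0 < d -> exists t', inI t' /\ t < t' < t + d /\ q t' < q t - e)) => [HR|nR].
  have [r] := @rat_in_itvoo _ (q t - e) (q t) ltac:(lra).
  rewrite in_itv /= => /andP[r1 r2].
  exists r => t' It'; split => tt'.
    have [t'' [It'' [/andP[h1 h2] h3]]] := HR (t' - t) ltac:(lra).
    have := @mono t'' t' It'' It' ltac:(lra); lra.
  have := @mono t' t It' It ltac:(lra); lra.
have [d0 [d00 Hd0]] : exists d0, 0 < d0 /\ forall t', inI t' -> t < t' < t + d0 -> q t - e <= q t'.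
  apply: contrapT => H; apply: nR => d d0.
  apply: contrapT => H2; apply: H; exists d; split => // t' It' tt'.
  rewrite leNgt; apply/negP => lt; apply: H2; exists t'; split => //.
have HL : forall t', inI t' -> t' < t -> q t + e < q t'.
  move=> t' It' tt'.
  have [t'' [It'' [nd ne]]] := He (Num.min (t - t') d0) ltac:(by rewrite lt_min subr_gt0 tt').
  have m1 : Num.min (t - t') d0 <= t - t' by rewrite ge_min lexx.
  have m2 : Num.min (t - t') d0 <= d0 by rewrite ge_min lexx orbT.
  move: nd; rewrite ltr_norml => /andP[n1 n2].
  case: (ltgtP t'' t) => [lt|gt|eq].
  - have m3 := @mono t'' t It'' It ltac:(lra).
    have := @mono t' t'' It' It'' ltac:(lra).
    move: ne; rewrite ger0_norm ?subr_ge0 //.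
    lra.
  - have m3 := @mono t t'' It It'' ltac:(lra).
    have := Hd0 _ It'' ltac:(apply/andP; split; lra).
    move: ne; rewrite ler0_norm ?subr_le0 //.
    lra.
  - by move: ne; rewrite eq subrr normr0; lra.
have [r] := @rat_in_itvoo _ (q t) (q t + e) ltac:(lra).
rewrite in_itv /= => /andP[r1 r2].
exists r => t' It'; split => tt'.
  have := @mono t t' It It' ltac:(lra); lra.
have := HL _ It' tt'; lra.
Qed.

Lemma good_all t : 0 < t < T -> cont t ->
  derivable F t 1 /\ forall d, est t d -> derive1 F t = d.
Proof.
move=> tI ct; split; first by apply: (cvgP (p t)); exact: good_cvg.
move=> d Ed; rewrite (@good_d t d tI ct Ed) derive1E /derive.
exact: cvg_lim (@good_cvg t tI ct).
Qed.

Lemma ae_good : \forall t \ae (@lebesgue_measure R), inI t ->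
  derivable F t 1 /\ forall d, est t d -> derive1 F t = d.
Proof.
pose bad t := 0 < t < T /\ ~ cont t.
have H0 : forall t, exists r : rat, bad t -> forall t', inI t' ->
    (t < t' -> q t' < ratr r) /\ (t' < t -> ratr r < q t').
  move=> t; case: (EM (bad t)) => [[tI nc]|nb].
    by have [r Hr] := @bad_rat t tI nc; exists r.
  by exists 0%Q.
have [rf Hrf] := choice H0.
pose B := [set t | bad t].
have noteq : forall x y, bad x -> bad y -> rf x = rf y -> x < y -> False.
  move=> x y bx by_ exy xy.
  have Ix : inI x by case: bx => /andP[a b] _; apply/inIP; split; lra.
  have Iy : inI y by case: by_ => /andP[a b] _; apply/inIP; split; lra.
  have Im : inI ((x + y) / 2) by move: Ix Iy => /inIP[? ?] /inIP[? ?]; apply/inIP; split; lra.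
  have [h1 _] := Hrf _ bx _ Im; have [_ h2] := Hrf _ by_ _ Im.
  rewrite exy in h1; have := h1 ltac:(lra); have := h2 ltac:(lra); lra.
have Bc : countable B.
  apply/countable_injP; exists (fun t => pickle (rf t)) => x y xB yB E.
  have exy := pcan_inj pickleK E.
  have {}xB : bad x by move: xB; rewrite inE.
  have {}yB : bad y by move: yB; rewrite inE.
  case: (ltgtP x y) => // [xy|yx]; first by case: (noteq _ _ xB yB exy xy).
  by case: (noteq _ _ yB xB (esym exy) yx).
have N1 : (@lebesgue_measure R).-negligible B.
  exists B; split => //.
  - by apply: countable_measurable Bc; exact: measurable_set1.
  - exact: countable_lebesgue_measure0.
have N2 : forall a : R, (@lebesgue_measure R).-negligible [set a].
  move=> a; exists [set a]; split => //.
  - by apply: countable_lebesgue_measure0; exact: countable1.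
apply: (negligibleS _ (negligibleU (negligibleU N1 (N2 0)) (N2 T))).
move=> t /= nP.
have It : inI t by apply: contrapT => nI; apply: nP => /nI.
move: (It) => /inIP[t0 tT].
case: (eqVneq t 0) => [->|n0]; first by left; right.
case: (eqVneq t T) => [->|nT]; first by right.
left; left; rewrite /B /bad.
have a : 0 < t by rewrite lt_def n0 t0.
have b : t < T by rewrite lt_def eq_sym nT tT.
split; first by rewrite a b.
by move=> ct; apply: nP => _; apply: good_all => //; rewrite a b.
Qed.

Lemma lipF (P : R) : (forall t, inI t -> `|p t| <= P) ->
  forall t t', inI t -> inI t' -> `|F t' - F t| <= (`|P| + C * `|T|) * `|t' - t|.
Proof.
move=> HP t t' It It'.
have h1 := Hp _ It _ It'; have h2 := Hp _ It' _ It.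
have [P1 P2] : `|p t| <= `|P| /\ `|p t'| <= `|P| by split; apply: (le_trans (HP _ _)) => //; exact: ler_norm.
move: It It' => /inIP[t0 tT] /inIP[t'0 t'T].
set h := t' - t in h1 h2 *.
have e2 : t - t' = - h by rewrite /h opprB.
rewrite e2 sqrrN mulNr in h2.
have hT : `|h| <= `|T|.
  rewrite (ger0_norm (x := T)); last lra.
  rewrite ler_norml; apply/andP; split; rewrite /h; lra.
have b1 : `|h * p t| <= `|h| * `|P| by rewrite normrM ler_wpM2l.
have b1' : `|h * p t'| <= `|h| * `|P| by rewrite normrM ler_wpM2l.
have b2 : C * h ^+ 2 <= C * `|T| * `|h|.
  rewrite -(real_normK (num_real h)) -mulrA ler_wpM2l // expr2 mulrC ler_wpM2r //.
have e3 : (`|P| + C * `|T|) * `|h| = `|h| * `|P| + C * `|T| * `|h| by ring.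
rewrite e3 ler_norml; apply/andP; split.
- have := ler_norm (- (h * p t')); rewrite normrN; lra.
- have := ler_norm (h * p t); lra.
Qed.

End AE.
Section Calc.
Variable R : realType.

Lemma der_cont (f df : R -> R) : (forall x : R, is_derive x (1 : R) f (df x)) -> continuous f.
Proof.
move=> H x; apply: differentiable_continuous; apply/derivable1_diffP.
by have [] := H x.
Qed.

Lemma lip1 (f df : R -> R) (a b B : R) : (forall x : R, is_derive x (1 : R) f (df x)) ->
  (forall x, a <= x <= b -> `|df x| <= B) ->
  forall x y, a <= x <= b -> a <= y <= b -> `|f y - f x| <= B * `|y - x|.
Proof.
move=> Hd HB.
have main : forall x y, a <= x <= b -> a <= y <= b -> x <= y -> `|f y - f x| <= B * `|y - x|.
  move=> x y /andP[ax xb] /andP[ay yb] xy.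
  have [c cI ->] := @MVT_segment R f df x y xy (fun z _ => Hd z)
    (continuous_subspaceT (@der_cont _ _ Hd)).
  rewrite normrM ler_wpM2r //.
  apply: HB; move: cI; rewrite in_itv /= => /andP[c1 c2].
  by rewrite (le_trans ax c1) (le_trans c2 yb).
move=> x y Hx Hy; case: (leP x y) => xy; first exact: main.
by rewrite distrC (distrC y); apply: main => //; exact: ltW.
Qed.

Lemma taylor1 (f df ddf : R -> R) (a b B : R) : (forall x : R, is_derive x (1 : R) f (df x)) ->
  (forall x : R, is_derive x (1 : R) df (ddf x)) ->
  (forall x, a <= x <= b -> `|ddf x| <= B) ->
  forall t t', a <= t <= b -> a <= t' <= b ->
  `|f t' - f t - (t' - t) * df t| <= B * (t' - t) ^+ 2.
Proof.
move=> Hf Hdf HB t t' It It'.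
pose g := f - df t \*: (@id R).
have Hg : forall x : R, is_derive x (1 : R) g (df x - df t *: 1).
  by move=> x; apply: is_deriveB.
have L1 := @lip1 _ _ _ _ _ Hdf HB.
set m := Num.min t t'; set M := Num.max t t'.
have Hg' : forall x, m <= x <= M -> `|df x - df t *: 1| <= B * `|t' - t|.
  move=> x /andP[mx xM].
  have Ix : a <= x <= b.
    move: It It' => /andP[a1 a2] /andP[a3 a4]; apply/andP; split.
      by apply: le_trans mx; rewrite /m le_min a1 a3.
    by apply: le_trans xM _; rewrite /M ge_max a2 a4.
  rewrite [_ *: 1]mulr1 (le_trans (L1 _ _ It Ix)) //.
  have B0 : 0 <= B by apply: le_trans (HB _ It); exact: normr_ge0.
  rewrite ler_wpM2l //.
  rewrite /m /M in mx xM.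
  case: (leP t t') => tt'.
  - rewrite (min_l tt') in mx; rewrite (max_r tt') in xM.
    by rewrite !ger0_norm ?subr_ge0 //; lra.
  - rewrite (min_r (ltW tt')) in mx; rewrite (max_l (ltW tt')) in xM.
    by rewrite !ler0_norm ?subr_le0 //; lra.
have := @lip1 _ _ _ _ _ Hg Hg'.
have tm : m <= t <= M by rewrite /m /M ge_min le_max lexx.
have tm' : m <= t' <= M by rewrite /m /M ge_min le_max lexx !orbT.
move=> /(_ t t' tm tm').
have -> : g t' - g t = f t' - f t - (t' - t) * df t.
  by rewrite /g !fctE /= -![_ *: _]/(_ * _); ring.
by rewrite -mulrA -expr2 (real_normK (num_real _)).
Qed.

End Calc.
Section Integ.
Variable R : realType.
Notation mu := (@lebesgue_measure R).
Notation J f := (Rintegral mu `[- pi, pi]%classic f).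

Lemma cB (f g : R -> R) : continuous f -> continuous g -> continuous (fun x => f x - g x).
Proof. by move=> cf cg x; apply: continuousB; [exact: cf | exact: cg]. Qed.
Lemma cD (f g : R -> R) : continuous f -> continuous g -> continuous (fun x => f x + g x).
Proof. by move=> cf cg x; apply: continuousD; [exact: cf | exact: cg]. Qed.
Lemma cM (f g : R -> R) : continuous f -> continuous g -> continuous (fun x => f x * g x).
Proof. by move=> cf cg x; apply: continuousM; [exact: cf | exact: cg]. Qed.
Lemma cC (c : R) : continuous (fun _ : R => c).
Proof. by move=> x; exact: cvg_cst. Qed.
Lemma cN (f : R -> R) : continuous f -> continuous (fun x => `|f x|).
Proof. by move=> cf x; apply: continuous_comp; [exact: cf | exact: norm_continuous]. Qed.

Arguments cB {f g}. Arguments cD {f g}. Arguments cM {f g}. Arguments cN {f}.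

Lemma bound1 (f : R -> R) a b : continuous f ->
  exists B, 0 <= B /\ forall x, a <= x <= b -> `|f x| <= B.
Proof.
move=> cf.
have /compact_bounded[M [_ HM]] := continuous_compact (continuous_subspaceT cf) (@segment_compact R a b).
exists (`|M| + 1); split; first by rewrite addr_ge0.
move=> x xI; apply: (HM (`|M| + 1)); first by have := ler_norm M; lra.
by exists x => //=; rewrite in_itv /= xI.
Qed.

Lemma bound2 (f : R * R -> R) a b c d : continuous f ->
  exists B, 0 <= B /\ forall t x, a <= t <= b -> c <= x <= d -> `|f (t, x)| <= B.
Proof.
move=> cf.
have /compact_bounded[M [_ HM]] := continuous_compact (continuous_subspaceT cf)
  (compact_setX (@segment_compact R a b) (@segment_compact R c d)).
exists (`|M| + 1); split; first by rewrite addr_ge0.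
move=> t x tI xI; apply: (HM (`|M| + 1)); first by have := ler_norm M; lra.
by exists (t, x) => //=; rewrite !in_itv /= tI xI.
Qed.

Lemma mI : measurable (`[- pi, pi]%classic : set (measurableTypeR R)).
Proof. exact: measurable_itv. Qed.

Lemma intI (f : R -> R) : continuous f -> mu.-integrable `[- pi, pi]%classic (EFin \o f).
Proof.
move=> cf; apply: continuous_compact_integrable; first exact: segment_compact.
exact: continuous_subspaceT.
Qed.

Arguments intI {f}.

Lemma muI : fine (mu `[- pi, pi]%classic) = 2 * pi.
Proof.
rewrite lebesgue_measure_itv /= lte_fin.
have p0 := pi_gt0 R.
have -> : (- pi < pi :> R) by rewrite (lt_trans _ p0) // oppr_lt0.
by rewrite opprK /=; ring.
Qed.

Lemma J_bound (f : R -> R) B : continuous f ->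
  (forall x, - pi <= x <= pi -> `|f x| <= B) -> `|J f| <= B * (2 * pi).
Proof.
move=> cf HB.
apply: (le_trans (le_normr_Rintegral mI (intI cf))).
apply: (le_trans (le_Rintegral mI (intI (cN cf)) (intI (cC B)) _)).
  by move=> x /=; rewrite in_itv /=; exact: HB.
by rewrite Rintegral_cst ?muI //; exact: mI.
Qed.

Lemma J_comb (f1 f2 f3 : R -> R) c : continuous f1 -> continuous f2 -> continuous f3 ->
  J (fun x => f1 x - f2 x - c * f3 x) = J f1 - J f2 - c * J f3.
Proof.
move=> c1 c2 c3.
have i12 := intI (cB c1 c2). have i3 := intI (cM (cC c) c3).
rewrite (RintegralB mI i12 i3) (RintegralB mI (intI c1) (intI c2)).
by rewrite (RintegralZl c mI (intI c3)).
Qed.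

End Integ.
Arguments intI {R f}. Arguments cB {R f g}. Arguments cD {R f g}. Arguments cM {R f g}.
Arguments cN {R f}. Arguments der_cont {R f df}.

Section Main.
Variable R : realType.
Variables (phi : R -> R) (u : R -> R -> R) (T : R).
Local Notation pi := (@pi R).
Hypothesis Hp0 : forall x, derivable phi x 1.
Hypothesis Hp1 : forall x, derivable (derive1 phi) x 1.
Hypothesis Hu : smooth2 u.

Lemma isd (f : R -> R) : (forall x, derivable f x 1) -> forall x : R, is_derive x (1 : R) f (derive1 f x).
Proof. by move=> H x; rewrite derive1E; apply: derivableP. Qed.

Lemma cphi : continuous phi. Proof. exact: (der_cont (isd _ Hp0)). Qed.
Lemma cphi' : continuous (derive1 phi). Proof. exact: (der_cont (isd _ Hp1)). Qed.
Lemma cu t : continuous (u t).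
Proof. apply: (@der_cont _ (u t) (derive1 (u t))); apply: isd => x; have [H _] := Hu [::]; exact: (H t x).2. Qed.
Lemma cut t : continuous (dt u t).
Proof. apply: (@der_cont _ (dt u t) (derive1 (dt u t))); apply: isd => x; have [H _] := Hu [:: true]; exact: (H t x).2. Qed.
Lemma du x : forall t : R, is_derive t (1 : R) (fun s => u s x) (dt u t x).
Proof. by apply: isd => t; have [H _] := Hu [::]; exact: (H t x).1. Qed.
Lemma dut x : forall t : R, is_derive t (1 : R) (fun s => dt u s x) (dt (dt u) t x).
Proof. by apply: isd => t; have [H _] := Hu [:: true]; exact: (H t x).1. Qed.
Lemma cps s : continuous (fun x => phishift phi s x).
Proof.
have cp : continuous (fun y : R => y - s).
  by move=> y; apply: cvgB; [exact: cvg_id | exact: cvg_cst].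
move=> x; exact: (continuous_comp (cp x) (cphi _)).
Qed.


Definition gg t s := normH2 (fun x => u t x - phishift phi s x).
Definition DD t s := 2 * ipH (dt u t) (fun x => u t x - phishift phi s x).
Local Notation J f := (Rintegral (@lebesgue_measure R) `[- pi, pi]%classic f).

Lemma est_main : exists C0 P, 0 <= C0 /\ forall t t' s, 0 <= t <= T -> 0 <= t' <= T ->
  - pi <= s <= pi ->
  `|gg t' s - gg t s - (t' - t) * DD t s| <= C0 * (t' - t) ^+ 2 /\ `|DD t s| <= P.
Proof.
have [B0 [B00 HB0]] := @bound2 R _ 0 T (- pi) pi (Hu [::]).2.
have [B1 [B10 HB1]] := @bound2 R _ 0 T (- pi) pi (Hu [:: true]).2.
have [B2 [B20 HB2]] := @bound2 R _ 0 T (- pi) pi (Hu [:: true; true]).2.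
have [Bp [Bp0 HBp]] := @bound1 R _ (- (2 * pi)) (2 * pi) cphi.
have pi0 := pi_gt0 R.
have k0 : 0 <= (2 * pi)^-1 by rewrite invr_ge0; lra.
set A := B0 + Bp.
have A0 : 0 <= A by rewrite addr_ge0.
exists (2 * A * B2 + B1 ^+ 2), (2 * B1 * A); split.
  by rewrite addr_ge0 ?sqr_ge0 // !mulr_ge0.
move=> t t' s It It' Is.
set h := t' - t.
pose a := fun x => u t x - phishift phi s x.
pose a' := fun x => u t' x - phishift phi s x.
have ca : continuous a by apply: cB; [exact: cu | exact: cps].
have ca' : continuous a' by apply: cB; [exact: cu | exact: cps].
have hA : forall x, - pi <= x <= pi -> `|a x| <= A.
  move=> x Ix; rewrite /a /phishift.
  apply: (le_trans (ler_normB _ _)); apply: lerD; first exact: (HB0 t x It Ix).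
  apply: HBp; move: Ix Is => /andP[? ?] /andP[? ?]; apply/andP; split; lra.
split; last first.
  have E3 : DD t s = 2 * ((2 * pi)^-1 * J (fun x => dt u t x * a x)) by [].
  rewrite E3 normrM (ger0_norm (x := 2)) // normrM (ger0_norm k0).
  have := @J_bound R (fun x => dt u t x * a x) (B1 * A) (cM (cut t) ca).
  move=> /(_ ltac:(move=> x Ix; rewrite normrM; apply: ler_pM => //; [exact: (HB1 t x It Ix) | exact: hA])).
  move=> HJ.
  have := ler_wpM2l k0 HJ.
  have -> : (2 * pi)^-1 * (B1 * A * (2 * pi)) = B1 * A by field; lra.
  move=> H; have := ler_wpM2l (ler0n _ 2) H.
  by have -> : 2%:R * (B1 * A) = 2 * B1 * A by rewrite mulrA.
have E1 : gg t' s = (2 * pi)^-1 * J (fun x => a' x * a' x) by [].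
have E2 : gg t s = (2 * pi)^-1 * J (fun x => a x * a x) by [].
have E3 : DD t s = 2 * ((2 * pi)^-1 * J (fun x => dt u t x * a x)) by [].
rewrite E1 E2 E3.
have -> : (2 * pi)^-1 * J (fun x => a' x * a' x) - (2 * pi)^-1 * J (fun x => a x * a x)
   - h * (2 * ((2 * pi)^-1 * J (fun x => dt u t x * a x)))
   = (2 * pi)^-1 * (J (fun x => a' x * a' x) - J (fun x => a x * a x)
       - (2 * h) * J (fun x => dt u t x * a x)) by ring.
rewrite -(@J_comb R _ _ _ (2 * h) (cM ca' ca') (cM ca ca) (cM (cut t) ca)).
rewrite normrM (ger0_norm k0).
set C0 := 2 * A * B2 + B1 ^+ 2.
have pw : forall x, - pi <= x <= pi ->
    `|a' x * a' x - a x * a x - 2 * h * (dt u t x * a x)| <= C0 * h ^+ 2.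
  move=> x Ix.
  have he := @taylor1 R _ _ _ 0 T B2 (du x) (dut x) (fun r Ir => HB2 r x Ir Ix) t t' It It'.
  have hd := @lip1 R _ _ 0 T B1 (du x) (fun r Ir => HB1 r x Ir Ix) t t' It It'.
  rewrite -/h in he hd.
  set A1 := a x in hA *.
  set d := u t' x - u t x in he hd.
  set e := d - h * dt u t x in he.
  have ew : a' x * a' x - A1 * A1 - 2 * h * (dt u t x * A1) = 2 * A1 * e + d ^+ 2.
    by rewrite /e /d /A1 /a /a'; ring.
  rewrite ew; apply: (le_trans (ler_normD _ _)).
  have hA1 := hA x Ix.
  have f1 : `|2 * A1 * e| <= 2 * (A * (B2 * h ^+ 2)).
    rewrite -mulrA normrM (ger0_norm (x := 2)) // ler_wpM2l // normrM.
    by apply: ler_pM.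
  have f2 : `|d ^+ 2| <= (B1 * `|h|) * (B1 * `|h|).
    by rewrite normrX expr2; apply: ler_pM.
  have e2 : (B1 * `|h|) * (B1 * `|h|) = B1 ^+ 2 * h ^+ 2.
    by rewrite -(real_normK (num_real h)); ring.
  have e3 : C0 * h ^+ 2 = 2 * (A * (B2 * h ^+ 2)) + B1 ^+ 2 * h ^+ 2 by rewrite /C0; ring.
  rewrite e3; lra.
have HJ := @J_bound R _ (C0 * h ^+ 2) (cB (cB (cM ca' ca') (cM ca ca)) (cM (@cC R (2 * h)) (cM (cut t) ca))) pw.
have := ler_wpM2l k0 HJ.
by have -> : (2 * pi)^-1 * (C0 * h ^+ 2 * (2 * pi)) = C0 * h ^+ 2 by field; lra.
Qed.

Lemma Fdist_min t s : is_minimizer phi (u t) s -> Fdist phi (u t) = gg t s.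
Proof.
move=> [Is Hs]; rewrite /Fdist.
set S := [set normH2 _ | s0 in _].
have Ss : S (gg t s) by exists s.
have lb : lbound S (gg t s) by move=> _ [s' Is' <-]; exact: Hs.
apply/eqP; rewrite eq_le; apply/andP; split.
- exact: (ge_inf (ex_intro _ _ lb) Ss).
- exact: lb_le_inf (ex_intro _ _ Ss) lb.
Qed.

Lemma lip_cont (f : R -> R) L : 0 <= L -> (forall x y, `|f x - f y| <= L * `|x - y|) -> continuous f.
Proof.
move=> L0 HL x; apply/cvgrPdist_le => e e0.
have d0 : 0 < e / (L + 1) by rewrite divr_gt0 // ltr_wpDl.
near=> y.
apply: (le_trans (HL x y)).
have hy : `|x - y| < e / (L + 1).
  near: y.
  by exists (e / (L + 1)) => //= z.
have : `|x - y| * (L + 1) <= e by rewrite -ler_pdivlMr ?ltr_wpDl // ltW.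
have := normr_ge0 (x - y); nra.
Unshelve. all: by end_near.
Qed.

Definition clamp (s : R) := Num.min pi (Num.max (- pi) s).

Lemma clampE s : (s <= - pi /\ clamp s = - pi) \/ (- pi <= s <= pi /\ clamp s = s)
  \/ (pi <= s /\ clamp s = pi).
Proof.
have pi0 := pi_gt0 R.
rewrite /clamp; case: (leP s (- pi)) => h1.
  by left; split => //; rewrite min_r //; lra.
case: (leP s pi) => h2.
  by right; left; split => //; rewrite andbT ltW.
by right; right; split => //; exact: ltW.
Qed.

Lemma clamp_lip s s' : `|clamp s - clamp s'| <= `|s - s'|.
Proof.
have pi0 := pi_gt0 R.
have n1 := ler_norm (s - s'); have n2 := ler_norm (- (s - s')); rewrite normrN in n2.
rewrite ler_norml; apply/andP.
case: (clampE s) => [[a1 ->]|[[/andP[a1 a2] ->]|[a1 ->]]];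
case: (clampE s') => [[b1 ->]|[[/andP[b1 b2] ->]|[b1 ->]]]; split; lra.
Qed.

Lemma clampI s : - pi <= clamp s <= pi.
Proof.
have pi0 := pi_gt0 R.
case: (clampE s) => [[a1 ->]|[[/andP[a1 a2] ->]|[a1 ->]]]; apply/andP; split; lra.
Qed.

Lemma clamp_id s : - pi <= s <= pi -> clamp s = s.
Proof.
move=> /andP[a1 a2].
case: (clampE s) => [[b1 ->]|[[_ ->]|[b1 ->]]] //; lra.
Qed.

Lemma min_exists t : exists s, is_minimizer phi (u t) s.
Proof.
have pi0 := pi_gt0 R.
have k0 : 0 <= (2 * pi)^-1 by rewrite invr_ge0; lra.
have [Bu [Bu0 HBu]] := @bound1 R _ (- pi) pi (cu t).
have [Bp [Bp0 HBp]] := @bound1 R _ (- (2 * pi)) (2 * pi) cphi.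
have [Lp [Lp0 HLp]] := @bound1 R _ (- (2 * pi)) (2 * pi) cphi'.
set L := 2 * Lp * (Bu + Bp) .
have L0 : 0 <= L by rewrite !mulr_ge0 // addr_ge0.
have lipg : forall s s', - pi <= s <= pi -> - pi <= s' <= pi ->
    `|gg t s - gg t s'| <= L * `|s - s'|.
  move=> s s' Is Is'.
  pose a := fun x => u t x - phishift phi s x.
  pose a' := fun x => u t x - phishift phi s' x.
  have ca : continuous a by apply: cB; [exact: cu | exact: cps].
  have ca' : continuous a' by apply: cB; [exact: cu | exact: cps].
  have E1 : gg t s = (2 * pi)^-1 * J (fun x => a x * a x) by [].
  have E2 : gg t s' = (2 * pi)^-1 * J (fun x => a' x * a' x) by [].
  rewrite E1 E2.
  have -> : (2 * pi)^-1 * J (fun x => a x * a x) - (2 * pi)^-1 * J (fun x => a' x * a' x)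
     = (2 * pi)^-1 * (J (fun x => a x * a x) - J (fun x => a' x * a' x) - 0 * J (fun x => a x * a x)) by ring.
  rewrite -(@J_comb R _ _ _ 0 (cM ca ca) (cM ca' ca') (cM ca ca)).
  rewrite normrM (ger0_norm k0).
  have pw : forall x, - pi <= x <= pi ->
      `|a x * a x - a' x * a' x - 0 * (a x * a x)| <= L * `|s - s'|.
    move=> x Ix.
    have Ixs : forall r, - pi <= r <= pi -> - (2 * pi) <= x - r <= 2 * pi.
      by move=> r; move: Ix => /andP[? ?] /andP[? ?]; apply/andP; split; lra.
    have hl := @lip1 R _ _ _ _ Lp (isd _ Hp0) HLp _ _ (Ixs _ Is) (Ixs _ Is').
    have e0 : x - s' - (x - s) = s - s' by ring.
    rewrite e0 in hl.
    have e : a x * a x - a' x * a' x - 0 * (a x * a x)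
        = (phi (x - s') - phi (x - s)) * (a x + a' x) by rewrite /a /a' /phishift; ring.
    rewrite e normrM.
    have ha : `|a x + a' x| <= 2 * (Bu + Bp).
      apply: (le_trans (ler_normD _ _)); rewrite /a /a' /phishift.
      have h1 := HBu x Ix; have h2 := HBp _ (Ixs _ Is); have h3 := HBp _ (Ixs _ Is').
      have := ler_normB (u t x) (phi (x - s)); have := ler_normB (u t x) (phi (x - s')); lra.
    have -> : L * `|s - s'| = (Lp * `|s - s'|) * (2 * (Bu + Bp)) by rewrite /L; ring.
    by apply: ler_pM.
  have HJ := @J_bound R _ (L * `|s - s'|) (cB (cB (cM ca ca) (cM ca' ca')) (cM (@cC R 0) (cM ca ca))) pw.
  have := ler_wpM2l k0 HJ.
  by have -> : (2 * pi)^-1 * (L * `|s - s'| * (2 * pi)) = L * `|s - s'| by field; lra.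
pose hf := fun s => gg t (clamp s).
have hc : continuous hf.
  apply: (@lip_cont _ L L0) => x y.
  apply: (le_trans (lipg _ _ (clampI x) (clampI y))).
  by rewrite ler_wpM2l // clamp_lip.
have [c cI Hc] := @EVT_min R hf (- pi) pi ltac:(lra) (continuous_subspaceT hc).
have cI' : - pi <= c <= pi by move: cI; rewrite in_itv.
exists c; split; first by rewrite /= in_itv.
move=> s' Is'; have Is'' : - pi <= s' <= pi by move: Is'; rewrite /= in_itv.
have := Hc s' ltac:(by rewrite in_itv).
by rewrite /hf !clamp_id.
Qed.

End Main.
Theorem lemma3p8 (R : realType) (M T : R) (phi : R -> R) (u : R -> R -> R) :
  0 < M ->
  smooth phi ->
  (forall x, phi (- x) = - phi x) ->
  periodic2pi phi ->
  zero_mean phi ->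
  (forall w : R -> R, H2per w -> w 0 = 0 ->
     normH2 (derive1 (derive1 w)) - ipH (fun x => w x * derive1 phi x) w
       >= M * normH2 w) ->
  smooth2 u ->
  (forall t, `[0, T]%classic t -> periodic2pi (u t) /\ zero_mean (u t)) ->
  (forall t, `[0, T]%classic t -> exists s, is_minimizer phi (u t) s) /\
  abs_cont 0 T (fun t => Fdist phi (u t)) /\
  (\forall t \ae (@lebesgue_measure R), `[0, T]%classic t ->
     derivable (fun r => Fdist phi (u r)) t 1 /\
     forall s, is_minimizer phi (u t) s ->
       derive1 (fun r => Fdist phi (u r)) t =
         2 * ipH (dt u t) (fun x => u t x - phishift phi s x)).
Proof.
move=> _ Hsm _ _ _ _ Hu _.
have Hp0 : forall x : R, derivable phi x 1 := fun x => Hsm 0%N x.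
have Hp1 : forall x : R, derivable (derive1 phi) x 1 := fun x => Hsm 1%N x.
have mins := @min_exists R phi u Hp0 Hp1 Hu.
have [C0 [P [C00 Hest]]] := @est_main R phi u T Hp0 Hu.
pose F := fun r => Fdist phi (u r).
have estF : forall t s, `[0, T]%classic t -> is_minimizer phi (u t) s ->
    est R F T C0 t (DD R phi u t s).
  move=> t s It ms t' It'.
  have [s' ms'] := mins t'.
  rewrite /F (@Fdist_min R _ _ _ _ ms') (@Fdist_min R _ _ _ _ ms).
  have Is : - pi <= s <= pi by move: ms => [+ _]; rewrite /= in_itv.
  have := ms'.2 s ms.1.
  move: It It' => /inIP[? ?] /inIP[? ?].
  have [H _] := Hest t t' s ltac:(apply/andP; split => //) ltac:(apply/andP; split => //) Is.
  move: H; rewrite ler_norml => /andP[_ H2].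
  rewrite /gg in H2 *; lra.
have [sel Hsel] := choice mins.
pose p := fun t => DD R phi u t (sel t).
have Hp : forall t, `[0, T]%classic t -> est R F T C0 t (p t).
  by move=> t It; exact: estF.
have HP : forall t, `[0, T]%classic t -> `|p t| <= P.
  move=> t /inIP[? ?].
  have Is : - pi <= sel t <= pi by move: (Hsel t) => [+ _]; rewrite /= in_itv.
  have [_ H] := Hest t t (sel t) ltac:(apply/andP; split => //) ltac:(apply/andP; split => //) Is.
  exact: H.
split; first by move=> t _; exact: mins.
split.
  apply: (@lip_abs_cont R F T (`|P| + C0 * `|T|)); first by rewrite addr_ge0 // mulr_ge0.
  exact: (@lipF R F p T C0 C00 Hp P HP).
have [N [mN N0 sub]] := @ae_good R F p T C0 C00 Hp.
exists N; split => // t /= nt; apply: sub => /= H; apply: nt => It.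
have [Hd Hdd] := H It; split => // s ms.
exact: Hdd _ (estF t s It ms).
Qed.
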